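(* Let $\mathbf{C}$ be a locally small category all of whose morphisms are monomorphisms, and let $\mathfrak{G} = (G_A)_{A \in \mathrm{Ob}(\mathbf{C})}$ be a family of groups with $G_A \le \mathrm{Aut}_\mathbf{C}(A)$ for all $A \in \mathrm{Ob}(\mathbf{C})$. If $\mathbf{C}$ has the $\mathfrak{G}$-Ramsey property, i.e. $t^\mathfrak{G}_\mathbf{C}(A) = 1$ for all $A \in \mathrm{Ob}(\mathbf{C})$, then $\mathrm{Aut}_\mathbf{C}(A) = G_A$ for all $A \in \mathrm{Ob}(\mathbf{C})$. In particular, if $\mathbf{C}$ has the embedding Ramsey property (the case $G_A = \{\mathrm{id}_A\}$ for all $A$), then every object of $\mathbf{C}$ is rigid, i.e. $\mathrm{Aut}_\mathbf{C}(A) = \{\mathrm{id}_A\}$.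
   Context: $\mathrm{Aut}_\mathbf{C}(A)$ is the group of invertible morphisms $A \to A$. For $f, g \in \hom(A,B)$ write $f \sim_\mathfrak{G} g$ if $f = g \cdot \alpha$ for some $\alpha \in G_A$; let $\binom{B}{A}_\mathfrak{G} = \hom(A,B)/{\sim_\mathfrak{G}} = \{f \cdot G_A : f \in \hom(A,B)\}$. For $w \in \hom(B,C)$ and a set $X$ of classes in $\binom{B}{A}_\mathfrak{G}$, $w \cdot X = \{(w\cdot f)/{\sim_\mathfrak{G}} : f/{\sim_\mathfrak{G}} \in X\}$. For $k,t \in \mathbb{N}$ and objects $A \to B \to C$ (meaning the homsets are nonempty), $C \overset{\mathfrak{G}}{\longrightarrow} (B)^A_{k,t}$ means: for every coloring $\chi : \binom{C}{A}_\mathfrak{G} \to k = \{0,\dots,k-1\}$ there is $w \in \hom(B,C)$ with $|\chi(w \cdot \binom{B}{A}_\mathfrak{G})| \le t$. The small $\mathfrak{G}$-Ramsey degree $t^\mathfrak{G}_\mathbf{C}(A)$ is the least positive integer $n$ such that for all $k \in \mathbb{N}$ and all $B \in \mathrm{Ob}(\mathbf{C})$ there is $C \in \mathrm{Ob}(\mathbf{C})$ with $C \overset{\mathfrak{G}}{\longrightarrow} (B)^A_{k,n}$; if no such $n$ exists, $t^\mathfrak{G}_\mathbf{C}(A) = \infty$. *)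

(* Defs.v *)
From mathcomp Require Import all_boot.
Set Implicit Arguments. Unset Strict Implicit. Unset Printing Implicit Defensive.

Record Category := {
  Ob :> Type;
  Hom : Ob -> Ob -> Type;
  comp : forall A B C : Ob, Hom B C -> Hom A B -> Hom A C;
  idm : forall A : Ob, Hom A A;
  comp_assoc : forall (A B C D : Ob) (h : Hom C D) (g : Hom B C) (f : Hom A B),
      comp h (comp g f) = comp (comp h g) f;
  comp_id_l : forall (A B : Ob) (f : Hom A B), comp (idm B) f = f;
  comp_id_r : forall (A B : Ob) (f : Hom A B), comp f (idm A) = f
}.

Arguments comp {c A B C} _ _.
Arguments idm {c} A.

Definition all_mono (C : Category) : Prop :=
  forall (A B D : C) (f : Hom B D) (g h : Hom A B), comp f g = comp f h -> g = h.

Definition is_aut (C : Category) (A : C) (f : Hom A A) : Prop :=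
  exists g : Hom A A, comp g f = idm A /\ comp f g = idm A.

Definition subgroup_of_Aut (C : Category) (A : C) (G : Hom A A -> Prop) : Prop :=
  [/\ G (idm A),
      (forall f g, G f -> G g -> G (comp f g)) &
      (forall f, G f -> exists g, G g /\ comp g f = idm A /\ comp f g = idm A)].

Definition group_family (C : Category) (G : forall A : C, Hom A A -> Prop) : Prop :=
  forall A : C, subgroup_of_Aut (G A).

(* A coloring chi : binom(C, A)_G -> k of the classes f/~G, represented as
   a function on hom(A, C) constant on the ~G-classes f . G_A. *)
Definition G_coloring (C : Category) (G : forall A : C, Hom A A -> Prop)
  (A D : C) (k : nat) (chi : Hom A D -> 'I_k) : Prop :=
  forall (f : Hom A D) (a : Hom A A), G A a -> chi (comp f a) = chi f.

Definition G_arrow (C : Category) (G : forall A : C, Hom A A -> Prop)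
  (D B A : C) (k t : nat) : Prop :=
  inhabited (Hom A B) /\ inhabited (Hom B D) /\
  forall chi : Hom A D -> 'I_k, G_coloring G chi ->
    exists w : Hom B D,
      exists S : {set 'I_k}, #|S| <= t /\ forall f : Hom A B, chi (comp w f) \in S.

Definition ramsey_bound (C : Category) (G : forall A : C, Hom A A -> Prop)
  (A : C) (n : nat) : Prop :=
  forall (k : nat) (B : C), inhabited (Hom A B) ->
    exists D : C, G_arrow G D B A k n.

Definition small_ramsey_degree_is (C : Category) (G : forall A : C, Hom A A -> Prop)
  (A : C) (n : nat) : Prop :=
  0 < n /\ ramsey_bound G A n /\ (forall m, 0 < m -> ramsey_bound G A m -> n <= m).

Definition G_Ramsey_property (C : Category) (G : forall A : C, Hom A A -> Prop) : Prop :=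
  forall A : C, small_ramsey_degree_is G A 1.

Definition trivial_family (C : Category) : forall A : C, Hom A A -> Prop :=
  fun A f => f = idm A.

(* Main.v *)
From Pilot Require Import Defs.
From mathcomp Require Import all_boot.
From Stdlib Require Import ProofIrrelevance ClassicalEpsilon FunctionalExtensionality PropExtensionality Classical.
Import Pilot.Defs.
Set Implicit Arguments.

Section S.
Variable C : Category.

Lemma aut_id (A : C) : is_aut (idm A).
Proof. exists (idm A); by rewrite comp_id_l. Qed.

Lemma aut_comp (A : C) (f g : Hom A A) : is_aut f -> is_aut g -> is_aut (comp f g).
Proof.
move=> [f' [H1 H2]] [g' [H3 H4]]; exists (comp g' f'); split.
- by rewrite -comp_assoc (comp_assoc f' f g) H1 comp_id_l H3.
- by rewrite -comp_assoc (comp_assoc g g' f') H4 comp_id_l H2.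
Qed.

Definition orb {A D : C} (h : Hom A D) : Hom A D -> Prop :=
  fun h' => exists a, is_aut a /\ h' = comp h a.

Lemma orb_eq (A D : C) (h : Hom A D) (b : Hom A A) : is_aut b ->
  orb (comp h b) = orb h.
Proof.
move=> Hb; apply: functional_extensionality => h'.
apply: propositional_extensionality; split.
- move=> [a [Ha ->]]; exists (comp b a); split; first exact: aut_comp.
  by rewrite comp_assoc.
- move=> [a [Ha ->]]; have [c [H1 H2]] := Hb.
  exists (comp c a); split.
  + apply: aut_comp => //; exists b; by split.
  + by rewrite -comp_assoc (comp_assoc b c a) H2 comp_id_l.
Qed.

Definition rep {A D : C} (h : Hom A D) : Hom A D :=
  epsilon (inhabits h) (orb h).

Lemma rep_spec (A D : C) (h : Hom A D) : orb h (rep h).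
Proof.
apply: (epsilon_spec (inhabits h) (orb h)); exists h; exists (idm A); split.
  exact: aut_id. by rewrite comp_id_r.
Qed.

Lemma rep_eq (A D : C) (h : Hom A D) (b : Hom A A) : is_aut b ->
  rep (comp h b) = rep h.
Proof.
move=> Hb; rewrite /rep; move: (inhabits (comp h b)) (inhabits h).
rewrite orb_eq // => i j; by rewrite (proof_irrelevance _ i j).
Qed.

End S.
Arguments rep_eq {C A D}.
Arguments orb {C A D}.
Arguments rep {C A D}.
Arguments orb_eq {C A D}.
Arguments rep_spec {C A D}.

Theorem proposition3p2 (C : Category) :
  all_mono C ->
  (forall G : forall A : C, Hom A A -> Prop,
     group_family G -> G_Ramsey_property G ->
     forall (A : C) (f : Hom A A), is_aut f <-> G A f) /\
  (G_Ramsey_property (@trivial_family C) ->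
     forall (A : C) (f : Hom A A), is_aut f <-> f = idm A).
Proof.
move=> mono.
have main : forall G : forall A : C, Hom A A -> Prop,
     group_family G -> G_Ramsey_property G ->
     forall (A : C) (f : Hom A A), is_aut f <-> G A f.
  move=> G HG HR A f; split; last first.
    move=> Gf; have [_ _ Hinv] := HG A; have [g [_ [H1 H2]]] := Hinv f Gf.
    by exists g.
  move=> Af; apply: NNPP => nGf.
  have [_ [Hb _]] := HR A.
  have [D [_ [_ Har]]] := Hb 2 A (inhabits (idm A)).
  pose chi := fun h : Hom A D =>
    if excluded_middle_informative (exists a, G A a /\ h = comp (rep h) a)
    then (@Ordinal 2 0 isT) else (@Ordinal 2 1 isT).
  have [Gid Gcomp Ginv] := HG A.
  have Gaut : forall b, G A b -> is_aut b.
    by move=> b /Ginv [c [_ [H1 H2]]]; exists c.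
  have col : G_coloring G chi.
    move=> h b Gb; rewrite /chi rep_eq; last exact: Gaut.
    case: excluded_middle_informative => [[a [Ga E]]|N1];
    case: excluded_middle_informative => [[a' [Ga' E']]|N2] => //.
    - exfalso; apply: N2; have [c [Gc [H1 H2]]] := Ginv b Gb.
      exists (comp a c); split; first exact: Gcomp.
      by rewrite comp_assoc -E -comp_assoc H2 comp_id_r.
    - exfalso; apply: N1. exists (comp a' b); split; first exact: Gcomp.
      by rewrite comp_assoc -E'.
  have [w [S [HS HwS]]] := Har chi col.
  have [a [Aa Ea]] := rep_spec w.
  have Ew : rep (comp w a) = rep w by rewrite rep_eq.
  have c0 : chi (comp w a) = (@Ordinal 2 0 isT).
    rewrite /chi; case: excluded_middle_informative => // N; exfalso; apply: N.
    by exists (idm A); rewrite Ew -Ea comp_id_r.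
  have c1 : chi (comp w (comp a f)) = (@Ordinal 2 1 isT).
    rewrite /chi; case: excluded_middle_informative => // [[a' [Ga' E']]].
    exfalso; apply: nGf.
    rewrite comp_assoc rep_eq // Ew -Ea in E'.
    by rewrite (mono _ _ _ _ _ _ E').
  have H0 := HwS a; have H1 := HwS (comp a f).
  rewrite c0 in H0; rewrite c1 in H1.
  have : 1 < #|S|.
    rewrite (cardD1 (@Ordinal 2 0 isT)) H0 (cardD1 (@Ordinal 2 1 isT)) /= !inE H1.
    by [].
  by rewrite ltnNge HS.
split => // HR A f.
apply: (main (@trivial_family C)) => //.
move=> B; split.
- by [].
- by move=> g h -> ->; rewrite comp_id_l.
- by move=> g ->; exists (idm B); rewrite /trivial_family comp_id_l.
Qed.
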